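(* Fix an environment $(\mathcal{S},\mathcal{A},\mathcal{T},d_0,\_,\gamma)$ and a set $\Pi$ of stationary policies whose discounted visit counts are collinear, i.e. all vectors $\mathcal{F}^\pi$, $\pi\in\Pi$, lie on a single line in $\mathbb{R}^{|\mathcal{S}||\mathcal{A}|}$. Then every pair of reward functions $(\mathcal{R},\mathcal{R}')$ such that $J_{\mathcal{R}}$ and $J_{\mathcal{R}'}$ are both non-trivial on $\Pi$ and not equivalent on $\Pi$ is hackable relative to $\Pi$ and this environment.
   Context: A Markov decision process is $(\mathcal{S},\mathcal{A},\mathcal{T},d_0,\mathcal{R},\gamma)$ with finite $\mathcal{S}$, finite $\mathcal{A}$ with $|\mathcal{A}|>1$, transition model $\mathcal{T}:\mathcal{S}\times\mathcal{A}\to\Delta(\mathcal{S})$, initial distribution $d_0$, reward $\mathcal{R}:\mathcal{S}\times\mathcal{A}\to\mathbb{R}$, $\gamma\in[0,1)$; all states reachable. An environment is an MDP without its reward function. A stationary policy is $\pi:\mathcal{S}\to\Delta(\mathcal{A})$. The discounted visit counts are $\mathcal{F}^\pi(s,a)=\mathbb{E}\big[\sum_{t\ge0}\gamma^t\mathbb{1}(s_t=s,a_t=a)\big]$ with $s_0\sim d_0$, $a_t\sim\pi(\cdot\mid s_t)$, $s_{t+1}\sim\mathcal{T}(\cdot\mid s_t,a_t)$, and $J_{\mathcal{R}}(\pi)=\langle\mathcal{R},\mathcal{F}^\pi\rangle$. $J$ is trivial on $\Pi$ if constant on $\Pi$; $J_1,J_2$ are equivalent on $\Pi$ if for all $\pi,\pi'\in\Pi$,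 $J_1(\pi)\ge J_1(\pi')\iff J_2(\pi)\ge J_2(\pi')$. Reward functions $\mathcal{R},\mathcal{R}'$ are hackable relative to $\Pi$ and an environment if there exist $\pi,\pi'\in\Pi$ with $J_{\mathcal{R}}(\pi)>J_{\mathcal{R}}(\pi')$ and $J_{\mathcal{R}'}(\pi')>J_{\mathcal{R}'}(\pi)$; otherwise unhackable. *)

(* Defs.v *)
From HB Require Import structures.
From mathcomp Require Import all_boot all_order all_algebra.
From mathcomp Require Import all_classical all_reals.
From mathcomp Require Import topology normedtype sequences.
Set Implicit Arguments. Unset Strict Implicit. Unset Printing Implicit Defensive.
Import Order.TTheory GRing.Theory Num.Theory numFieldNormedType.Exports.
Local Open Scope ring_scope.

Section MDP.
Variables (R : realType) (S A : finType).

Definition is_distr (T : finType) (p : T -> R) : Prop :=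
  (forall x, 0 <= p x) /\ \sum_(x : T) p x = 1.

(* An environment (S, A, T, d0, _, gamma): transition model T s a s',
   initial distribution d0, discount gamma. *)
Record env := Env {
  trans : S -> A -> S -> R;
  init : S -> R;
  disc : R }.

(* stationary policy pi s a = pi(a | s) *)
Definition policy := S -> A -> R.

Definition is_policy (pi : policy) : Prop := forall s, is_distr (pi s).

Fixpoint state_dist (E : env) (pi : policy) (t : nat) : S -> R :=
  match t with
  | 0 => init E
  | t'.+1 => fun s' =>
      \sum_(s : S) \sum_(a : A) state_dist E pi t' s * pi s a * trans E s a s'
  end.

Definition visit (E : env) (pi : policy) (s : S) (a : A) : R :=
  limn (fun n => \sum_(0 <= t < n) disc E ^+ t * (state_dist E pi t s * pi s a)).

Definition J (E : env) (Rw : S -> A -> R) (pi : policy) : R :=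
  \sum_(s : S) \sum_(a : A) Rw s a * visit E pi s a.

Definition valid_env (E : env) : Prop :=
  [/\ forall s a, is_distr (trans E s a),
      is_distr (init E),
      0 <= disc E < 1,
      (1 < #|A|)%N &
      forall s, exists pi, is_policy pi /\ exists t, 0 < state_dist E pi t s].

Definition trivial_on (Pi : set policy) (f : policy -> R) : Prop :=
  forall pi pi', Pi pi -> Pi pi' -> f pi = f pi'.

Definition equiv_on (Pi : set policy) (f g : policy -> R) : Prop :=
  forall pi pi', Pi pi -> Pi pi' -> (f pi' <= f pi <-> g pi' <= g pi).

Definition hackable (E : env) (Pi : set policy) (R1 R2 : S -> A -> R) : Prop :=
  exists pi pi', [/\ Pi pi, Pi pi', J E R1 pi' < J E R1 pi & J E R2 pi < J E R2 pi'].

Definition collinear_visits (E : env) (Pi : set policy) : Prop :=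
  exists (p v : S -> A -> R), (exists s a, v s a != 0) /\
    forall pi, Pi pi -> exists c : R, forall s a, visit E pi s a = p s a + c * v s a.

End MDP.

(* Main.v *)
Require Import Defs.
From HB Require Import structures.
From mathcomp Require Import all_boot all_order all_algebra.
From mathcomp Require Import all_classical all_reals.
From mathcomp Require Import topology normedtype sequences.
Import Order.TTheory GRing.Theory Num.Theory numFieldNormedType.Exports.
Local Open Scope ring_scope.

Lemma J_affine (R : realType) (S A : finType) (E : env R S A) (Rw p v : S -> A -> R) pi c :
  (forall s a, visit E pi s a = p s a + c * v s a) ->
  J E Rw pi = \sum_s \sum_a Rw s a * p s a + c * \sum_s \sum_a Rw s a * v s a.
Proof.
move=> H; rewrite /J mulr_sumr -big_split /=; apply: eq_bigr => s _.
rewrite mulr_sumr -big_split /=; apply: eq_bigr => a _.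
by rewrite H mulrDr mulrCA.
Qed.

Theorem mainTheorem2 (R : realType) (S A : finType) (E : env R S A)
  (Pi : set (policy R S A)) :
  valid_env E ->
  (forall pi, Pi pi -> is_policy pi) ->
  collinear_visits E Pi ->
  forall Rw Rw' : S -> A -> R,
    ~ trivial_on Pi (J E Rw) ->
    ~ trivial_on Pi (J E Rw') ->
    ~ equiv_on Pi (J E Rw) (J E Rw') ->
    hackable E Pi Rw Rw'.
Proof.
move=> _ _ [p [v [_ Hc]]] Rw Rw' nt nt' neq.
set a := \sum_s \sum_a Rw s a * p s a.
set b := \sum_s \sum_a Rw s a * v s a.
set a' := \sum_s \sum_a Rw' s a * p s a.
set b' := \sum_s \sum_a Rw' s a * v s a.
have Hpi : forall pi, Pi pi -> exists c, J E Rw pi = a + c * b /\ J E Rw' pi = a' + c * b'.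
  move=> pi /Hc [c Hv]; exists c; split; exact: J_affine.
have bn : b != 0.
  apply/eqP => b0; apply: nt => pi pi' /Hpi [c [-> _]] /Hpi [c' [-> _]].
  by rewrite b0 !mulr0.
have bn' : b' != 0.
  apply/eqP => b0; apply: nt' => pi pi' /Hpi [c [_ ->]] /Hpi [c' [_ ->]].
  by rewrite b0 !mulr0.
have Heq : forall pi pi', Pi pi -> Pi pi' ->
    (J E Rw pi = J E Rw pi' <-> J E Rw' pi = J E Rw' pi').
  move=> pi pi' /Hpi [c [-> ->]] /Hpi [c' [-> ->]].
  split => /addrI /eqP; rewrite (inj_eq (mulIf _)) // => /eqP -> //.
case: (pselect (hackable E Pi Rw Rw')) => // nh; exfalso; apply: neq.
move=> pi pi' P1 P2; split => H.
- rewrite leNgt; apply/negP => Hg; apply: nh; exists pi, pi'; split => //.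
  rewrite lt_neqAle H andbT; apply/negP => /eqP e.
  by move: Hg; rewrite (proj1 (Heq _ _ P2 P1) e) ltxx.
- rewrite leNgt; apply/negP => Hf; apply: nh; exists pi', pi; split => //.
  rewrite lt_neqAle H andbT; apply/negP => /eqP e.
  by move: Hf; rewrite (proj2 (Heq _ _ P2 P1) e) ltxx.
Qed.
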